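(* Let $q,d\geq 2$ be coprime integers. Suppose that for every $\mathbf{s}\in\mathbb{Z}^5$ the density $\delta(q,d;\mathbf{s})$ exists. Then for every $\theta_w,x\in\mathbb{Z}/d\mathbb{Z}$ and every unit $\theta_u$ of $\mathbb{Z}/d\mathbb{Z}$, $$\delta(q,d;\theta_u,\theta_w,0,0,x)=\frac{1}{d}.$$ In particular, the map $n\mapsto u_q(n)$ is uniformly distributed modulo $d$ (every residue class modulo $d$ is attained by $u_q(n)$ on a set of $n$ of natural density $1/d$).
   Context: For an integer $q\geq 2$ and $n\in\mathbb{N}$: $v_q(0)=0$ and, for $n>0$, $v_q(n)=\max\{k: q^k\mid n\}$; $w_q(n)=\sum_{i=0}^n v_q(i)$; $u_q(n)=\sum_{i=0}^n w_q(i)$. For $\mathbf{s}=(\theta_u,\theta_w,\theta_2,\theta_1,\theta_0)$ with entries in $\mathbb{Z}$ or $\mathbb{Z}/d\mathbb{Z}$, $\gamma(A,q,d;\mathbf{s})$ is the number of $n\in\mathbb{N}$, $n<A$, with $\theta_u u_q(n)+\theta_w w_q(n)+\theta_2\frac{n(n+1)}{2}+\theta_1 n+\theta_0\equiv 0\pmod d$, and $\delta(q,d;\mathbf{s})=\lim_{N\to\infty}\gamma(N,q,d;\mathbf{s})/N$ (when the limit exists). *)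

(* Defs.v *)
From HB Require Import structures.
From mathcomp Require Import all_boot all_order all_algebra.
From mathcomp Require Import all_classical all_reals all_analysis.
Set Implicit Arguments. Unset Strict Implicit. Unset Printing Implicit Defensive.
Import Order.TTheory GRing.Theory Num.Theory.

(* v_q(0) = 0; for n > 0, v_q(n) = max{k : q^k | n}.  For q >= 2 and n > 0
   every such k satisfies k <= n, so the max over k < n.+1 is the max over all k. *)
Definition vq (q n : nat) : nat :=
  if n == 0 then 0 else \max_(k < n.+1 | q ^ k %| n) (k : nat).

Definition wq (q n : nat) : nat := \sum_(i < n.+1) vq q i.

Definition uq (q n : nat) : nat := \sum_(i < n.+1) wq q i.

Definition expr_s (q : nat) (tu tw t2 t1 t0 : int) (n : nat) : int :=
  (tu * (uq q n)%:Z + tw * (wq q n)%:Z + t2 * ((n * n.+1) %/ 2)%:Z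
   + t1 * n%:Z + t0)%R.

Definition gamma (A q d : nat) (tu tw t2 t1 t0 : int) : nat :=
  #|[set n : 'I_A | (expr_s q tu tw t2 t1 t0 n == 0 %[mod d%:Z])%Z]|.

(* The sequence N |-> gamma(N,q,d;s)/N, whose limit is delta(q,d;s). *)
Definition gamma_ratio (R : realType) (q d : nat) (tu tw t2 t1 t0 : int)
  : nat -> R :=
  fun N => ((gamma N q d tu tw t2 t1 t0)%:R / N%:R)%R.

(* Main.v *)
Require Import Defs.
From HB Require Import structures.
From mathcomp Require Import all_boot all_order all_algebra.
From mathcomp Require Import all_classical all_reals all_analysis.
From mathcomp Require Import cyclic.
From mathcomp Require Import zify ring lra.
Import Order.TTheory GRing.Theory Num.Theory.
Import numFieldNormedType.Exports.
Local Open Scope classical_set_scope.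
Local Open Scope ring_scope.
Section NatPart.
Local Open Scope nat_scope.
Variable q : nat.
Hypothesis hq : 1 < q.

Lemma vq_dvd n : 0 < n -> forall k, (q ^ k %| n) = (k <= vq q n).
Proof.
move=> n0 k; rewrite /vq; have -> : (n == 0) = false by lia.
have hlt : forall j, q ^ j %| n -> j < n.+1.
  move=> j hj; have := dvdn_leq n0 hj; have := ltn_expl j hq; lia.
have hne : (0 < #|[pred k : 'I_n.+1 | q ^ k %| n]|).
  apply/card_gt0P; exists ord0; by rewrite inE expn0 dvd1n.
have [i0 Pi0 Hm] := @eq_bigmax_cond _ [pred k : 'I_n.+1 | q ^ k %| n] (fun k => nat_of_ord k) hne.
apply/idP/idP.
  move=> hk; exact: (@leq_bigmax_cond _ [pred k : 'I_n.+1 | q ^ k %| n] (fun k => nat_of_ord k) (Ordinal (hlt _ hk)) hk).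
move: Hm; rewrite /= => -> hk; apply: dvdn_trans Pi0; exact: dvdn_exp2l.
Qed.

Lemma vq_unique n a : 0 < n -> (forall k, (q ^ k %| n) = (k <= a)) -> vq q n = a.
Proof.
move=> n0 H; have E := @vq_dvd _ n0.
apply/eqP; rewrite eqn_leq; apply/andP; split.
  by rewrite -H E.
by rewrite -E H.
Qed.

Lemma vq0 : vq q 0 = 0. Proof. by rewrite /vq. Qed.

Lemma vq_small i : 0 < i < q -> vq q i = 0.
Proof.
move=> /andP[i0 iq]; apply: vq_unique => // k.
case: k => [|k]; first by rewrite expn0 dvd1n.
rewrite ltn0; apply/negbTE/negP => hd.
have := dvdn_leq i0 hd; have : q <= q ^ k.+1 by rewrite -{1}(expn1 q) leq_pexp2l; lia.
lia.
Qed.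

Lemma vq1 : vq q 1 = 0. Proof. apply: vq_small; lia. Qed.

Lemma vq_mul K j : 0 < j -> vq q (q ^ K * j) = K + vq q j.
Proof.
move=> j0; have qK : 0 < q ^ K by rewrite expn_gt0; lia.
apply: vq_unique; first by rewrite muln_gt0 qK.
move=> k; case: (leqP k K) => hk.
  rewrite (leq_trans hk (leq_addr _ _)); apply: dvdn_mulr; exact: dvdn_exp2l.
have -> : q ^ k = q ^ K * q ^ (k - K) by rewrite -expnD; congr (_ ^ _); lia.
rewrite dvdn_pmul2l // vq_dvd //; lia.
Qed.

Lemma vq_add K j i : 0 < i < q ^ K -> vq q (q ^ K * j + i) = vq q i.
Proof.
move=> /andP[i0 iK]; apply: vq_unique; first by lia.
move=> k; case: (leqP k K) => hk.
  rewrite dvdn_addr; first by rewrite vq_dvd.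
  apply: dvdn_mulr; exact: dvdn_exp2l.
have hkK : q ^ K %| q ^ k by apply: dvdn_exp2l; lia.
have -> : (k <= vq q i) = false.
  rewrite -vq_dvd //; apply/negbTE/negP => hd.
  have := dvdn_leq i0 (dvdn_trans hkK hd); lia.
apply/negbTE/negP => hd.
have : q ^ K %| i by rewrite -(dvdn_addr _ (dvdn_mulr j (dvdnn (q ^ K)))); exact: dvdn_trans hkK hd.
move/(dvdn_leq i0); lia.
Qed.

Lemma wqS n : wq q n.+1 = wq q n + vq q n.+1.
Proof. by rewrite /wq big_ord_recr. Qed.

Lemma wq0 : wq q 0 = 0.
Proof. by rewrite /wq big_ord_recr big_ord0 vq0. Qed.

Lemma wq1 : wq q 1 = 0.
Proof. by rewrite wqS wq0 vq1. Qed.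

Definition Fs n := \sum_(i < n) wq q i.

Lemma FsS n : Fs n.+1 = Fs n + wq q n.
Proof. by rewrite /Fs big_ord_recr. Qed.

Lemma Fs0 : Fs 0 = 0.
Proof. by rewrite /Fs big_ord0. Qed.

Lemma uqE n : uq q n = Fs n.+1.
Proof. by []. Qed.

Lemma W_block K m B : B < q ^ K ->
  wq q (q ^ K * m + B) = m * wq q (q ^ K) + wq q m + wq q B.
Proof.
have qK : 0 < q ^ K by rewrite expn_gt0; lia.
have wN : wq q (q ^ K) = wq q (q ^ K).-1 + K.
  rewrite -{1}(prednK qK) wqS prednK // -{2}(muln1 (q ^ K)) vq_mul // vq1; lia.
elim: m B => [|m IH] B.
  by rewrite muln0 add0n wq0; lia.
elim: B => [|B IHB] hB.
  have -> : q ^ K * m.+1 + 0 = (q ^ K * m + (q ^ K).-1).+1 by lia.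
  rewrite wqS IH; last by lia.
  have -> : (q ^ K * m + (q ^ K).-1).+1 = q ^ K * m.+1 by lia.
  rewrite vq_mul // wqS wq0 wN; lia.
have -> : q ^ K * m.+1 + B.+1 = (q ^ K * m.+1 + B).+1 by lia.
rewrite wqS IHB; last by lia.
have -> : (q ^ K * m.+1 + B).+1 = q ^ K * m.+1 + B.+1 by lia.
rewrite vq_add; last by lia.
rewrite (wqS B); lia.
Qed.

Lemma F_block K m B : B <= q ^ K ->
  Fs (q ^ K * m + B) = q ^ K * wq q (q ^ K) * 'C(m, 2) + q ^ K * Fs m
     + m * Fs (q ^ K) + B * (m * wq q (q ^ K) + wq q m) + Fs B.
Proof.
have qK : 0 < q ^ K by rewrite expn_gt0; lia.
elim: m B => [|m IH] B.
  by rewrite muln0 add0n wq0 Fs0 bin0n; lia.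
elim: B => [|B IHB] hB.
  rewrite addn0 (_ : q ^ K * m.+1 = q ^ K * m + q ^ K); last by lia.
  rewrite IH // binS bin1 FsS Fs0; ring.
rewrite (_ : q ^ K * m.+1 + B.+1 = (q ^ K * m.+1 + B).+1); last by lia.
rewrite FsS IHB; last by lia.
rewrite W_block; last by lia.
rewrite (FsS B); ring.
Qed.

End NatPart.
Section Good.
Local Open Scope nat_scope.
Variable q : nat.
Hypothesis hq : 1 < q.

Lemma wq_small i : i < q -> wq q i = 0.
Proof.
elim: i => [|i IH] hi; first exact: wq0.
rewrite wqS IH; last by lia.
rewrite vq_small //; lia.
Qed.

Lemma wq_q : wq q q = 1.
Proof.
have := wqS q q.-1; rewrite (prednK (ltnW hq)) => ->.
rewrite wq_small; last by lia.
have := @vq_mul q hq 1 1 isT; rewrite expn1 muln1 (@vq1 _ hq) => ->.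
by [].
Qed.

Lemma uq_q : uq q q = 1.
Proof.
rewrite uqE FsS wq_q.
have : forall i, i <= q -> Fs q i = 0.
  elim=> [|i IH] hi; first exact: Fs0.
  by rewrite FsS IH ?wq_small //; lia.
by move=> ->.
Qed.

Lemma uq1 : uq q 1 = 0.
Proof. by rewrite uqE FsS FsS Fs0 wq0 wq1. Qed.

Lemma pow_w K m : wq q (q ^ K * m) = m * wq q (q ^ K) + wq q m.
Proof. rewrite -[q ^ K * m]addn0 W_block // ?wq0 ?addn0 // expn_gt0; lia. Qed.

Lemma pow_F K m : Fs q (q ^ K * m) =
  q ^ K * wq q (q ^ K) * 'C(m, 2) + q ^ K * Fs q m + m * Fs q (q ^ K).
Proof. by rewrite -[q ^ K * m]addn0 F_block // Fs0 mul0n !addn0. Qed.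

Variable d : nat.

Lemma good_A K a : q ^ K = 1 + d * a -> forall j, exists a' b',
  q ^ (K * j) = 1 + d * a' /\ wq q (q ^ (K * j)) = j * wq q (q ^ K) + d * b'.
Proof.
move=> hK; elim=> [|j [a' [b' [h1 h2]]]].
  exists 0, 0; rewrite muln0 expn0 wq1; lia.
have E : q ^ (K * j.+1) = q ^ K * q ^ (K * j) by rewrite -expnD mulnS.
exists (a + a' + d * a * a'), (a' * wq q (q ^ K) + b'); split.
  rewrite E hK h1; ring.
rewrite E pow_w h2 h1; ring.
Qed.

Lemma good_B K a b : q ^ K = 1 + d * a -> wq q (q ^ K) = d * b -> forall j, exists c,
  Fs q (q ^ (K * j)) = j * Fs q (q ^ K) + d * c.
Proof.
move=> hK hw; elim=> [|j [c hc]].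
  exists 0; rewrite muln0 expn0 FsS Fs0 wq0; lia.
have E : q ^ (K * j.+1) = q ^ K * q ^ (K * j) by rewrite -expnD mulnS.
have [a' [b' [h1 h2]]] := @good_A _ _ hK j.
exists ((1 + d * a) * b * 'C(q ^ (K * j), 2) + a * (j * Fs q (q ^ K) + d * c) + c + a' * Fs q (q ^ K)).
rewrite E pow_F hc hw h1 hK; ring.
Qed.

Hypothesis hd : 1 < d.
Hypothesis cqd : coprime q d.

Lemma good_exists : exists K, q < q ^ K /\ (exists a, q ^ K = 1 + d * a) /\
  (exists b, wq q (q ^ K) = d * b) /\ (exists c, Fs q (q ^ K) = d * c).
Proof.
set K0 := totient d.
have K0p : 0 < K0 by rewrite totient_gt0; lia.
have h0 : q ^ K0 = 1 + d * (q ^ K0 %/ d).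
  have := Euler_exp_totient cqd; rewrite (modn_small hd) => e.
  by rewrite {1}(divn_eq (q ^ K0) d) e mulnC addnC.
have [a1 [b1 [h1 h1w]]] := @good_A _ _ h0 d.
have h1w' : wq q (q ^ (K0 * d)) = d * (wq q (q ^ K0) + b1) by rewrite h1w; ring.
have [a2 [b2 [h2 h2w]]] := @good_A _ _ h1 d.
have [c2 h2F] := @good_B _ _ _ h1 h1w' d.
exists (K0 * d * d); split.
  have : q ^ 2 <= q ^ (K0 * d * d) by rewrite leq_pexp2l; nia.
  have : q < q ^ 2 by rewrite -{1}(expn1 q) ltn_exp2l.
  lia.
split; first by exists a2.
split.
  exists (wq q (q ^ (K0 * d)) + b2); rewrite h2w; ring.
by exists (Fs q (q ^ (K0 * d)) + c2); rewrite h2F; ring.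
Qed.

End Good.
Lemma gammaE A q d tu tw t2 t1 t0 : gamma A q d tu tw t2 t1 t0 =
  (\sum_(n < A) ((expr_s q tu tw t2 t1 t0 n == 0 %[mod d%:Z])%Z : nat))%N.
Proof.
rewrite /gamma -sum1dep_card big_mkcond /=; apply: eq_bigr => i _; by case: ifP.
Qed.

Lemma sum_split (f : nat -> nat) N L :
  (\sum_(n < N * L) f n = \sum_(B < N) \sum_(m < L) f (N * m + B))%N.
Proof.
elim: L => [|L IH].
  by rewrite muln0 big_ord0 big1 // => B _; rewrite big_ord0.
rewrite mulnS addnC big_split_ord IH /= -big_split /=.
by apply: eq_bigr => B _; rewrite big_ord_recr /= addnC.
Qed.

Lemma sum_y d (e : int) : (0 < d)%N ->
  (\sum_(y < d) ((e + y%:Z == 0 %[mod d%:Z])%Z : nat))%N = 1%N.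
Proof.
move=> d0.
set r := absz ((- e) %% d%:Z)%Z.
have r_eq : r%:Z = ((- e) %% d%:Z)%Z.
  by rewrite /r abszE ger0_norm // modz_ge0 // -lt0n.
have rd : (r < d)%N.
  by rewrite -ltz_nat r_eq ltz_pmod // ltz_nat.
have key : forall y : 'I_d, ((e + y%:Z == 0 %[mod d%:Z])%Z) = (val y == r).
  move=> y; apply/idP/idP.
  - rewrite eqz_mod_dvd subr0 => h.
    have : ((y%:Z == - e %[mod d%:Z])%Z) by rewrite eqz_mod_dvd opprK addrC.
    by rewrite modz_small ?ltz_nat ?ltn_ord // -r_eq eqz_nat.
  - move=> /eqP hy.
    have : ((y%:Z == - e %[mod d%:Z])%Z) by rewrite modz_small ?ltz_nat ?ltn_ord // hy r_eq.
    by rewrite !eqz_mod_dvd opprK subr0 addrC.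
under eq_bigr => y _ do rewrite key.
rewrite (bigD1 (Ordinal rd)) //= eqxx big1 // => i hi.
have : val i != r by apply: contra hi => /eqP h; apply/eqP/val_inj.
by move/negbTE => ->.
Qed.

Lemma gamma_sum L q d (tu tw : int) : (0 < d)%N ->
  (\sum_(y < d) gamma L q d tu tw 0 0 y%:Z)%N = L.
Proof.
move=> d0.
under eq_bigr => y _ do rewrite gammaE.
rewrite exchange_big /=.
rewrite (eq_bigr (fun n => 1%N)); last first.
  move=> n _; rewrite -(@sum_y d (expr_s q tu tw 0 0 0 n) d0).
  apply: eq_bigr => y _. have E : forall z : int, expr_s q tu tw 0 0 z n = expr_s q tu tw 0 0 0 n + z by move=> z; rewrite /expr_s; ring. by rewrite E.
by rewrite sum_nat_const card_ord muln1.
Qed.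

Section Cong.
Variables (q d K a b c : nat).
Hypothesis hq : (1 < q)%N.
Hypothesis ha : (q ^ K = 1 + d * a)%N.
Hypothesis hb : wq q (q ^ K) = (d * b)%N.
Hypothesis hc : Fs q (q ^ K) = (d * c)%N.

Lemma modz_shift (e1 e2 k : int) : e1 = k * d%:Z + e2 ->
  (e1 == 0 %[mod d%:Z])%Z = (e2 == 0 %[mod d%:Z])%Z.
Proof. by move=> ->; rewrite modzMDl. Qed.

Lemma expr_shift (tu tw y : int) m B : (B < q ^ K)%N ->
  (expr_s q tu tw 0 0 y (q ^ K * m + B) == 0 %[mod d%:Z])%Z =
  (expr_s q tu (tw + tu * B%:Z) 0 0 (y + tu * (uq q B)%:Z + tw * (wq q B)%:Z) m
     == 0 %[mod d%:Z])%Z.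
Proof.
move=> hB.
apply: (@modz_shift _ _ (tu * ((1 + d * a)%:Z * b%:Z * ('C(m, 2))%:Z + a%:Z * (Fs q m)%:Z
   + m%:Z * c%:Z + (B%:Z + 1) * m%:Z * b%:Z) + tw * m%:Z * b%:Z)).
rewrite /expr_s !mul0r !addr0 uqE -addnS F_block //.
rewrite W_block // (uqE q m) (uqE q B) !FsS hb hc ha.
rewrite ?PoszD ?PoszM ?PoszD ?PoszM ?PoszD ?PoszM.
ring.
Qed.

Lemma gamma_split L (tu tw y : int) :
  gamma (q ^ K * L) q d tu tw 0 0 y =
  (\sum_(B < q ^ K) gamma L q d tu (tw + tu * B%:Z) 0 0
      (y + tu * (uq q B)%:Z + tw * (wq q B)%:Z))%N.
Proof.
rewrite gammaE (sum_split (fun n => ((expr_s q tu tw 0 0 y n == 0 %[mod d%:Z])%Z : nat))).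
apply: eq_bigr => B _; rewrite gammaE.
by apply: eq_bigr => m _; rewrite expr_shift.
Qed.
End Cong.

Lemma cvg_sumR (R : realType) (n : nat) (u : nat -> nat -> R) (l : nat -> R) :
  (forall i, u i @ \oo --> l i) ->
  (fun k => \sum_(i < n) u i k) @ \oo --> \sum_(i < n) l i.
Proof.
move=> h; elim: n => [|n IH].
  under eq_cvg do rewrite big_ord0.
  rewrite big_ord0; exact: cvg_cst.
under eq_cvg do rewrite big_ord_recr.
rewrite big_ord_recr; exact: cvgD.
Qed.

Lemma modz_eqE (X m : int) : (X %% m)%Z = X - (X %/ m)%Z * m.
Proof. rewrite {2}(divz_eq X m); ring. Qed.

Section Main.
Variables (R : realType) (q d : nat) (tu : int).
Hypothesis hq : (1 < q)%N.
Hypothesis hd : (1 < d)%N.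
Hypothesis Hcvg : forall tw y : int, cvg (gamma_ratio R q d tu tw 0 0 y @ \oo).
Hypothesis ctu : coprimez tu d%:Z.

Definition D (tw y : int) : R := lim (gamma_ratio R q d tu tw 0 0 y @ \oo).

Lemma D_cvg tw y : gamma_ratio R q d tu tw 0 0 y @ \oo --> D tw y.
Proof. exact: Hcvg. Qed.

Lemma Dcong tw tw' y y' : (d%:Z %| tw - tw')%Z -> (d%:Z %| y - y')%Z ->
  D tw y = D tw' y'.
Proof.
move=> /dvdzP[k1 h1] /dvdzP[k2 h2].
rewrite /D (_ : gamma_ratio R q d tu tw 0 0 y = gamma_ratio R q d tu tw' 0 0 y') //.
apply: funext => L.
rewrite /gamma_ratio; congr (_ / _); congr (_%:R).
rewrite !gammaE; apply: eq_bigr => n _.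
congr nat_of_bool; apply: (@modz_shift d _ _ (k1 * (wq q n)%:Z + k2)).
have -> : tw = tw' + k1 * d%:Z by rewrite -h1; ring.
have -> : y = y' + k2 * d%:Z by rewrite -h2; ring.
rewrite /expr_s; ring.
Qed.


Lemma D_red tw y : D tw y = D (absz (tw %% d%:Z)%Z)%:Z (absz (y %% d%:Z)%Z)%:Z.
Proof.
have hm : forall a : int, (d%:Z %| a - (absz (a %% d%:Z)%Z)%:Z)%Z.
  move=> a; rewrite abszE ger0_norm; last by rewrite modz_ge0 //; lia.
  by rewrite -eqz_mod_dvd modz_mod.
exact: Dcong.
Qed.

Lemma red_lt (a : int) : (absz (a %% d%:Z)%Z < d)%N.
Proof.
rewrite -ltz_nat abszE ger0_norm; last by rewrite modz_ge0 //; lia.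
by rewrite ltz_pmod //; lia.
Qed.

Variables (K a b c : nat).
Hypothesis ha : (q ^ K = 1 + d * a)%N.
Hypothesis hb : wq q (q ^ K) = (d * b)%N.
Hypothesis hc : Fs q (q ^ K) = (d * c)%N.
Hypothesis hqK : (q < q ^ K)%N.

Lemma D_rel tw y : D tw y = ((q ^ K)%:R)^-1 *
  \sum_(B < q ^ K) D (tw + tu * B%:Z) (y + tu * (uq q B)%:Z + tw * (wq q B)%:Z).
Proof.
have N0 : (0 < q ^ K)%N by lia.
have h1 := cvg_comp _ _ (@cvg_mulnl _ N0) (D_cvg tw y).
have h2 : (fun L => ((q ^ K)%:R)^-1 * \sum_(B < q ^ K)
     gamma_ratio R q d tu (tw + tu * B%:Z) 0 0 (y + tu * (uq q B)%:Z + tw * (wq q B)%:Z) L)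
   @ \oo --> ((q ^ K)%:R)^-1 *
  \sum_(B < q ^ K) D (tw + tu * B%:Z) (y + tu * (uq q B)%:Z + tw * (wq q B)%:Z).
  apply: cvgMl_tmp.
  exact: (@cvg_sumR R (q ^ K) (fun B L => gamma_ratio R q d tu (tw + tu * B%:Z) 0 0
      (y + tu * (uq q B)%:Z + tw * (wq q B)%:Z) L)
      (fun B => D (tw + tu * B%:Z) (y + tu * (uq q B)%:Z + tw * (wq q B)%:Z))
      (fun B => D_cvg _ _)).
have E : (gamma_ratio R q d tu tw 0 0 y \o muln (q ^ K)) = (fun L => ((q ^ K)%:R)^-1 * \sum_(B < q ^ K)
     gamma_ratio R q d tu (tw + tu * B%:Z) 0 0 (y + tu * (uq q B)%:Z + tw * (wq q B)%:Z) L).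
  apply: funext => L /=; rewrite /gamma_ratio (@gamma_split q d K a b c hq ha hb hc).
  rewrite natr_sum natrM invfM -mulr_suml; ring.
rewrite E in h1.
exact: (cvg_unique _ h1 h2).
Qed.


Definition G (p : 'I_d * 'I_d) : R := D (p.1 : nat)%:Z (p.2 : nat)%:Z.

Lemma max_exists : exists pm : 'I_d * 'I_d, forall tw y, D tw y <= G pm.
Proof.
have d0 : (0 < d)%N by lia.
have [pm _ Hpm] := @arg_maxP _ R _ (Ordinal d0, Ordinal d0) xpredT G isT.
exists pm => tw y; rewrite D_red.
exact: (Hpm (Ordinal (red_lt tw), Ordinal (red_lt y))).
Qed.

Variable M : R.
Hypothesis hM : forall tw y, D tw y <= M.

Lemma max_spread tw y : D tw y = M -> forall B, (B < q ^ K)%N ->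
  D (tw + tu * B%:Z) (y + tu * (uq q B)%:Z + tw * (wq q B)%:Z) = M.
Proof.
move=> hD B hB.
have hs : \sum_(B < q ^ K) (M - D (tw + tu * B%:Z) (y + tu * (uq q B)%:Z + tw * (wq q B)%:Z)) = 0.
  rewrite sumrB sumr_const card_ord.
  have hr := D_rel tw y; rewrite hD in hr.
  rewrite -mulr_natl hr mulrA mulfV ?mul1r ?subrr // pnatr_eq0; lia.
have hpos : forall i : 'I_(q ^ K), xpredT i -> 0 <= M - D (tw + tu * i%:Z) (y + tu * (uq q i)%:Z + tw * (wq q i)%:Z).
  by move=> i _; rewrite subr_ge0.
have := @psumr_eq0P _ _ xpredT (fun B : 'I_(q ^ K) => M - D (tw + tu * B%:Z) (y + tu * (uq q B)%:Z + tw * (wq q B)%:Z)) hpos hs (Ordinal hB) isT.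
by move=> /= h; apply/eqP; rewrite eq_sym -subr_eq0 h.
Qed.

Lemma spread1 tw y : D tw y = M -> D (tw + tu) y = M.
Proof.
move=> hD; have := @max_spread _ _ hD 1%N (ltn_trans hq hqK).
by rewrite (@uq1 _ hq) (@wq1 _ hq) !mulr0 !addr0 mulr1.
Qed.

Lemma spreadk tw y : D tw y = M -> forall k : nat, D (tw + tu * k%:Z) y = M.
Proof.
move=> hD; elim=> [|k IH]; first by rewrite mulr0 addr0.
have -> : tw + tu * k.+1%:Z = (tw + tu * k%:Z) + tu by rewrite -addn1 PoszD; ring.
exact: spread1.
Qed.

Lemma spread_all tw y : D tw y = M -> forall tw', D tw' y = M.
Proof.
move=> hD tw'.
have [u [v huv]] := Bezoutz tu d%:Z.
have g1 : gcdz tu d%:Z = 1 by apply/eqP.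
rewrite g1 in huv.
rewrite -(@spreadk _ _ hD (absz (((tw' - tw) * u) %% d%:Z)%Z)).
apply: Dcong; last by rewrite subrr dvdz0.
rewrite abszE ger0_norm; last by rewrite modz_ge0 //; lia.
apply/dvdzP; exists ((tw' - tw) * v + tu * (((tw' - tw) * u) %/ d%:Z)%Z).
rewrite modz_eqE.
move: (((tw' - tw) * u) %/ d%:Z)%Z => Q.
apply/eqP; rewrite -subr_eq0.
have -> : tw' - (tw + tu * ((tw' - tw) * u - Q * d%:Z)) -
   ((tw' - tw) * v + tu * Q) * d%:Z = (tw' - tw) * (1 - (u * tu + v * d%:Z)) by ring.
by rewrite huv subrr mulr0.
Qed.

Lemma all_M tw0 y0 : D tw0 y0 = M -> forall tw y, D tw y = M.
Proof.
move=> h0 tw y.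
have h1 := @spread_all _ _ h0 (y - y0 - tu).
have := @max_spread _ _ h1 q hqK.
rewrite (@uq_q _ hq) (@wq_q _ hq) !mulr1 => h2.
have e : y0 + tu + (y - y0 - tu) = y by ring.
rewrite e in h2.
exact: (@spread_all _ _ h2 tw).
Qed.

End Main.

Theorem theorem4p4 (R : realType) (q d : nat) :
  (2 <= q)%N -> (2 <= d)%N -> coprime q d ->
  (forall tu tw t2 t1 t0 : int,
      cvg (gamma_ratio R q d tu tw t2 t1 t0 @ \oo)) ->
  forall (tu tw x : int), coprimez tu d%:Z ->
    gamma_ratio R q d tu tw 0 0 x @ \oo --> ((d%:R)^-1 : R).
Proof.
move=> hq hd cqd Hall tu tw x ctu.
have Hcvg : forall tw y : int, cvg (gamma_ratio R q d tu tw 0 0 y @ \oo).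
  by move=> tw' y; exact: Hall.
have [K [hqK [[a ha] [[b hb] [c hc]]]]] := @good_exists q hq d hd cqd.
have [pm hpm] := @max_exists R q d tu hq hd ctu K a b c ha hb hc hqK.
have allM := @all_M R q d tu hq hd Hcvg ctu K a b c ha hb hc hqK _ hpm
   (pm.1 : nat)%:Z (pm.2 : nat)%:Z erefl.
set M := G R q d tu pm in allM.
have h1 := @cvg_sumR R d (fun y L => gamma_ratio R q d tu tw 0 0 y%:Z L)
  (fun y => D R q d tu tw y%:Z) (fun y => @D_cvg R q d tu Hcvg tw y%:Z).
have h2 : (fun L => \sum_(y < d) gamma_ratio R q d tu tw 0 0 y%:Z L) @ \oo --> (1 : R).
  apply: cvg_near_cst; exists 1%N => // L /= hL.
  rewrite /gamma_ratio -mulr_suml -natr_sum gamma_sum; last by lia.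
  by rewrite mulfV // pnatr_eq0; lia.
have hsum : (\sum_(i < d) D R q d tu tw i%:Z) = 1 by exact: (cvg_unique _ h1 h2).
rewrite (eq_bigr (fun=> M)) in hsum; last by move=> y _; exact: allM.
rewrite sumr_const card_ord in hsum.
have hM : M = (d%:R)^-1.
  have dn0 : (d%:R : R) != 0 by rewrite pnatr_eq0; lia.
  by apply: (mulfI dn0); rewrite [LHS]mulr_natl hsum divff.
rewrite -hM -(allM tw x).
exact: (@D_cvg R q d tu Hcvg tw x).
Qed.
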